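(* Let $k\ge 2$ and $n$ be integers with $2k-1 \le n$. Then $$N(CM,k,n)\le\begin{cases} n-k+1 & \text{if } k \text{ is even},\\ (n-k+1)\cdot\bigl(1+\mathsf{d}(k-1,n)\bigr) & \text{if } k \text{ is odd.}\end{cases}$$
   Context: We are given $n$ balls, the set $[n]=\{1,\dots,n\}$, each colored with one of two colors by an unknown coloring. A ball $i$ is a majority ball if more than $n/2$ balls have the same color as $i$. A query is a subset $Q\subseteq[n]$ with $|Q|=k$. In the Counting Model (CM), the answer to a query $Q$ is the number $i\le k/2$ such that $Q$ contains exactly $i$ balls of one of the colors (and $k-i$ of the other); no indication of which color is given. A non-adaptive strategy is a family of queries $Q_1,\dots,Q_q$ fixed in advance. It succeeds if for every coloring, the answers determine the outcome: either every coloring consistent with the answers has no majority ball, or there is a ball that is a majority ball in every coloring consistent with the answers. $N(CM,k,n)$ is the minimum number of queries in a successful non-adaptive strategy. A 2-coloring of a $k$-element set is balanced if the sizes of the two color classes differ by at most one. A hypergraph has Property C if its vertices can be 2-colored so that every edge is balanced. For $k\ge 2$, $\mathsf{d}(k,n)$ denotes the minimum number of edges of a $k$-uniform hypergraph on $n$ vertices that does not have Property C. *)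

(* Defs.v *)
From mathcomp Require Import all_boot.
Set Implicit Arguments. Unset Strict Implicit. Unset Printing Implicit Defensive.

Definition coloring (n : nat) := {ffun 'I_n -> bool}.

Definition ncol n (c : coloring n) (b : bool) (Q : {set 'I_n}) : nat :=
  #|[set x in Q | c x == b]|.

(* Counting Model answer: the number i <= k/2 such that Q contains exactly
   i balls of one colour (and k-i of the other), i.e. the minority count. *)
Definition cm_answer n (c : coloring n) (Q : {set 'I_n}) : nat :=
  minn (ncol c true Q) (ncol c false Q).

Definition majority_ball n (c : coloring n) (i : 'I_n) : Prop :=
  n < 2 * #|[set j | c j == c i]|.

Definition consistent n (qs : seq {set 'I_n}) (c c' : coloring n) : Prop :=
  forall Q, Q \in qs -> cm_answer c' Q = cm_answer c Q.

Definition cm_successful n k (qs : seq {set 'I_n}) : Prop :=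
  (forall Q, Q \in qs -> #|Q| = k) /\
  forall c : coloring n,
    (forall c', consistent qs c c' -> forall i, ~ majority_ball c' i) \/
    (exists i, forall c', consistent qs c c' -> majority_ball c' i).

Definition N_CM_le (k n m : nat) : Prop :=
  exists qs : seq {set 'I_n}, cm_successful k qs /\ size qs <= m.

Definition uniform n k (H : {set {set 'I_n}}) : Prop :=
  forall e, e \in H -> #|e| = k.

Definition balanced n (c : coloring n) (e : {set 'I_n}) : Prop :=
  ncol c true e <= (ncol c false e).+1 /\ ncol c false e <= (ncol c true e).+1.

Definition property_C n (H : {set {set 'I_n}}) : Prop :=
  exists c : coloring n, forall e, e \in H -> balanced c e.

(* Main.v *)
Require Import Defs.
From mathcomp Require Import all_boot.
From mathcomp Require Import zify.
From Stdlib Require Import Classical.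
Set Implicit Arguments. Unset Strict Implicit. Unset Printing Implicit Defensive.

Definition rr n (c : coloring n) (B : {set 'I_n}) (j : 'I_n) := cm_answer c (j |: B).

Lemma ncolU1 n (c : coloring n) b (B : {set 'I_n}) j : j \notin B ->
  ncol c b (j |: B) = ncol c b B + (c j == b).
Proof.
move=> jB; rewrite /ncol.
have -> : [set x in j |: B | c x == b] =
   if c j == b then j |: [set x in B | c x == b] else [set x in B | c x == b].
  apply/setP => x; case: (eqVneq x j) => [->|hx]; case: ifP => hb;
    rewrite !inE ?eqxx ?hb ?(negbTE jB) ?(negbTE hx) //=.
case: ifP => hb; last by rewrite addn0.
by rewrite cardsU1 inE (negbTE jB) /= addnC.
Qed.

Lemma ncolTF n (c : coloring n) (B : {set 'I_n}) : ncol c true B + ncol c false B = #|B|.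
Proof.
rewrite /ncol -(cardsID [set x | c x] B).
by congr (_ + _); apply: eq_card => x; rewrite !inE; case: (c x); rewrite ?andbT ?andbF.
Qed.

Lemma rE n (c : coloring n) (B : {set 'I_n}) j : j \notin B ->
  rr c B j = minn (ncol c true B + nat_of_bool (c j)) (ncol c false B + nat_of_bool (~~ c j)).
Proof. by move=> jB; rewrite /rr /cm_answer !ncolU1 //; case: (c j). Qed.

Lemma L1 n (c : coloring n) (B : {set 'I_n}) j j' : j \notin B -> j' \notin B -> c j = c j' ->
  rr c B j = rr c B j'.
Proof. by move=> jB j'B e; rewrite !rE // e. Qed.

Lemma L2 n (c : coloring n) (B : {set 'I_n}) j j' : j \notin B -> j' \notin B ->
  ncol c true B != ncol c false B -> rr c B j = rr c B j' -> c j = c j'.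
Proof.
move=> jB j'B hne; rewrite !rE //; move: hne.
case: (c j); case: (c j') => //= hne h; exfalso; lia.
Qed.

Lemma bal_const n (c : coloring n) (B : {set 'I_n}) j j' : j \notin B -> j' \notin B ->
  ncol c true B = ncol c false B -> rr c B j = rr c B j'.
Proof. move=> jB j'B e; rewrite !rE // e; case: (c j); case: (c j') => /=; lia. Qed.

Lemma formula n (c : coloring n) (B : {set 'I_n}) j j' : j \notin B -> j' \notin B ->
  rr c B j != rr c B j' ->
  ncol c (c j) B = if rr c B j < rr c B j' then #|B| - rr c B j else rr c B j'.
Proof.
move=> jB j'B; rewrite !rE // -(ncolTF c B).
by case: (c j); case: (c j') => /= hne; case: ifP => h; lia.
Qed.

Lemma unbal n (c : coloring n) (B : {set 'I_n}) j j' : j \notin B -> j' \notin B ->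
  rr c B j != rr c B j' -> ncol c true B != ncol c false B.
Proof.
move=> jB j'B hne; apply/eqP => e; move/eqP: hne; apply; exact: bal_const.
Qed.

Lemma classcard n (c : coloring n) (B : {set 'I_n}) j j' : j \notin B -> j' \notin B ->
  rr c B j != rr c B j' ->
  #|[set x | c x == c j]| =
  (if rr c B j < rr c B j' then #|B| - rr c B j else rr c B j')
  + #|[set l in ~: B | rr c B l == rr c B j]|.
Proof.
move=> jB j'B hne; rewrite -(formula jB j'B hne) -(cardsID B [set x | c x == c j]).
have ub := unbal jB j'B hne.
congr (_ + _); apply: eq_card => x; rewrite !inE.
  by rewrite andbC.
case: (boolP (x \in B)) => xB //=.
apply/eqP/eqP => h; first exact: L1.
exact: (L2 xB jB ub h).
Qed.

Lemma key n (c c' : coloring n) (B : {set 'I_n}) j j' : j \notin B -> j' \notin B ->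
  rr c B j != rr c B j' -> (forall l, l \notin B -> rr c' B l = rr c B l) ->
  #|[set x | c' x == c' j]| = #|[set x | c x == c j]|.
Proof.
move=> jB j'B hne hc.
have hne' : rr c' B j != rr c' B j' by rewrite !hc.
rewrite (classcard jB j'B hne) (classcard jB j'B hne') !hc //.
congr (_ + _); apply: eq_card => x; rewrite !inE.
by case: (boolP (x \in B)) => xB //=; rewrite hc.
Qed.

Definition qsof n (L : seq {set 'I_n}) : seq {set 'I_n} :=
  flatten [seq [seq j |: B | j <- enum (~: B)] | B <- L].

Lemma mem_qs n (L : seq {set 'I_n}) B j : B \in L -> j \notin B -> j |: B \in qsof L.
Proof.
move=> BL jB; apply/flatten_mapP; exists B => //; apply/mapP; exists j => //.
by rewrite mem_enum inE.
Qed.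

Lemma qs_card n k (L : seq {set 'I_n}) : (forall B, B \in L -> #|B| = k - 1) -> 1 <= k ->
  forall Q, Q \in qsof L -> #|Q| = k.
Proof.
move=> hL hk Q /flatten_mapP [B BL /mapP [j]]; rewrite mem_enum inE => jB ->.
rewrite cardsU1 jB hL //; lia.
Qed.

Lemma size_qs n k (L : seq {set 'I_n}) : (forall B, B \in L -> #|B| = k - 1) ->
  size (qsof L) = size L * (n - (k - 1)).
Proof.
elim: L => [|B L IH] hL //=.
rewrite size_cat size_map -cardE IH; last by move=> B' hB'; apply: hL; rewrite inE hB' orbT.
have := cardsC B; rewrite card_ord hL ?inE ?eqxx //; lia.
Qed.

Lemma success n k (L : seq {set 'I_n}) : (forall B, B \in L -> #|B| = k - 1) -> 1 <= k ->
  (exists i, forall c' : coloring n,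
     (forall B j j', B \in L -> j \notin B -> j' \notin B -> rr c' B j = rr c' B j') ->
     majority_ball c' i) ->
  cm_successful k (qsof L).
Proof.
move=> hL hk [i hi]; split; first exact: qs_card.
move=> c.
have cons : forall c', consistent (qsof L) c c' -> forall B l, B \in L -> l \notin B ->
    rr c' B l = rr c B l.
  by move=> c' hc B l BL lB; apply: hc; apply: mem_qs.
case: (classic (exists B j j', [/\ B \in L, j \notin B, j' \notin B & rr c B j != rr c B j']))
  => [[B [j [j' [BL jB j'B hne]]]] | Hno]; last first.
  right; exists i => c' hc; apply: hi => B j j' BL jB j'B.
  rewrite !(cons c' hc) //.
  case: (eqVneq (rr c B j) (rr c B j')) => // h; exfalso; apply: Hno.
  by exists B, j, j'.
have cj' : c j' = ~~ c j.
  by move: hne; rewrite !rE //; case: (c j); case: (c j'); rewrite //= eqxx.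
have K : forall c', consistent (qsof L) c c' ->
    #|[set x | c' x == c' j]| = #|[set x | c x == c j]| /\
    #|[set x | c' x == c' j']| = #|[set x | c x == c j']|.
  move=> c' hc; split.
    by apply: (key jB j'B hne) => l lB; apply: cons.
  by apply: (key j'B jB _) => [|l lB]; [rewrite eq_sym | apply: cons].
have cj'' : forall c', consistent (qsof L) c c' -> c' j' = ~~ c' j.
  move=> c' hc; have hne' : rr c' B j != rr c' B j' by rewrite !(cons c' hc).
  by move: hne'; rewrite !rE //; case: (c' j); case: (c' j'); rewrite //= eqxx.
case: (classic (exists x, majority_ball c x)) => [[x hx] | nomaj].
  right; case: (eqVneq (c x) (c j)) => e.
    exists j => c' hc; rewrite /majority_ball (K c' hc).1 -e; exact: hx.
  exists j' => c' hc; rewrite /majority_ball (K c' hc).2.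
  have -> : c j' = c x by rewrite cj'; move: e; case: (c x); case: (c j).
  exact: hx.
left => c' hc y; rewrite /majority_ball.
case: (eqVneq (c' y) (c' j)) => e.
  have -> : [set z | c' z == c' y] = [set z | c' z == c' j] by apply/setP => z; rewrite !inE e.
  by rewrite (K c' hc).1 => h; apply: nomaj; exists j.
have -> : [set z | c' z == c' y] = [set z | c' z == c' j'].
  apply/setP => z; rewrite !inE (cj'' c' hc).
  by move: e; case: (c' y); case: (c' j).
by rewrite (K c' hc).2 => h; apply: nomaj; exists j'.
Qed.

Lemma ex_subset (T : finType) (S : {set T}) m : m <= #|S| ->
  exists A : {set T}, A \subset S /\ #|A| = m.
Proof.
move=> hm; exists [set x in take m (enum S)]; split.
  by apply/subsetP => x; rewrite inE => /mem_take; rewrite mem_enum.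
rewrite cardsE (card_uniqP _) ?take_uniq ?enum_uniq //.
by rewrite size_takel // -cardE.
Qed.

Lemma card_compl n (A : {set 'I_n}) : #|~: A| = n - #|A|.
Proof. have := cardsC A; rewrite card_ord; lia. Qed.

Lemma card_le n (S : {set 'I_n}) : #|S| <= n.
Proof. by have := max_card S; rewrite card_ord. Qed.

Lemma maj_sub n (S T : {set 'I_n}) : T \subset S -> n < 2 * #|T| -> n < 2 * #|S|.
Proof. by move=> sub h; apply: (leq_trans h); rewrite leq_mul2l subset_leq_card ?orbT. Qed.

Lemma hw_even n k (A : {set 'I_n}) : #|A| = k - 1 -> odd (k - 1) -> n < 2 * (n - (k - 1)) ->
  exists i, forall c' : coloring n,
     (forall B j j', B \in [:: A] -> j \notin B -> j' \notin B -> rr c' B j = rr c' B j') ->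
     majority_ball c' i.
Proof.
move=> hA hodd hn.
have : 0 < #|~: A| by rewrite card_compl hA; lia.
case/card_gt0P => i; rewrite inE => iA.
exists i => c' H.
have ub : ncol c' true A != ncol c' false A.
  apply/eqP => e; move: hodd; rewrite -hA -(ncolTF c' A) e addnn odd_double //.
rewrite /majority_ball.
have sub : ~: A \subset [set y | c' y == c' i].
  apply/subsetP => l; rewrite !inE => lA; apply/eqP.
  by apply: (L2 lA iA ub); apply: H; rewrite ?inE.
apply: (maj_sub sub); rewrite card_compl hA; lia.
Qed.

Lemma hw_odd n k (A e1 : {set 'I_n}) (H : {set {set 'I_n}}) :
  uniform (k - 1) H -> ~ property_C H -> e1 \in H -> #|A| = k - 1 ->
  (forall x, x \in A -> x \notin e1) -> 2 * (k - 1) < n -> n < 2 * (n - (k - 1)) ->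
  exists i, forall c' : coloring n,
     (forall B j j', B \in A :: enum H -> j \notin B -> j' \notin B -> rr c' B j = rr c' B j') ->
     majority_ball c' i.
Proof.
move=> uH npc e1H hA disj hn1 hn2.
have : 0 < #|~: (A :|: e1)|.
  rewrite card_compl; have := cardsU A e1; rewrite hA (uH e1 e1H); lia.
case/card_gt0P => i; rewrite !inE negb_or => /andP [iA ie1].
exists i => c' Hc.
have [e' He' nb] : exists2 e', e' \in H & ~ balanced c' e'.
  case: (classic (exists2 e', e' \in H & ~ balanced c' e')) => // hn; exfalso.
  apply: npc; exists c' => e he; apply: NNPP => hb; apply: hn; by exists e.
have ub : ncol c' true e' != ncol c' false e'.
  by apply/eqP => e; apply: nb; rewrite /balanced e; split.
have e'L : e' \in A :: enum H by rewrite inE mem_enum He' orbT.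
have ce' := uH e' He'.
have : 0 < #|~: e'| by rewrite card_compl ce'; lia.
case/card_gt0P => l0; rewrite inE => l0e'.
have mono : forall l, l \notin e' -> c' l = c' l0.
  by move=> l le'; apply: (L2 le' l0e' ub); apply: Hc.
have big : n < 2 * #|[set y | c' y == c' l0]|.
  have sub : ~: e' \subset [set y | c' y == c' l0].
    by apply/subsetP => l; rewrite !inE => le'; apply/eqP; apply: mono.
  apply: (maj_sub sub); rewrite card_compl ce'; lia.
suff ei : c' i = c' l0.
  rewrite /majority_ball.
  have -> : [set y | c' y == c' i] = [set y | c' y == c' l0] by apply/setP => y; rewrite !inE ei.
  exact: big.
case: (eqVneq (c' i) (c' l0)) => // ne; exfalso.
have bal : forall B, B \in A :: enum H -> #|B| = k - 1 -> i \notin B ->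
    2 * ncol c' (c' i) B = k - 1.
  move=> B BL cB iB.
  case: (eqVneq (ncol c' true B) (ncol c' false B)) => [eq|neq].
    by have := ncolTF c' B; rewrite cB; case: (c' i); lia.
  have : 0 < #|~: B :&: ~: e'|.
    have := cardsUI (~: B) (~: e'); rewrite !card_compl cB ce'.
    have := card_le (~: B :|: ~: e'); lia.
  case/card_gt0P => m; rewrite !inE => /andP [mB me'].
  have h1 : c' m = c' i by apply: (L2 mB iB neq); apply: Hc.
  by move/eqP: ne; rewrite -h1 mono.
have hA2 := bal A (mem_head _ _) hA iA.
have e1L : e1 \in A :: enum H by rewrite inE mem_enum e1H orbT.
have he2 := bal e1 e1L (uH e1 e1H) ie1.
set X1 := [set x in A | c' x == c' i].
set X2 := [set x in e1 | c' x == c' i].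
have sub : i |: (X1 :|: X2) \subset e'.
  apply/subsetP => x; rewrite !inE => hx.
  apply/negPn/negP => xe'; move/eqP: ne; apply.
  rewrite -(mono x xe').
  by case/orP: hx => [/eqP -> //|/orP [/andP [_ /eqP ->]|/andP [_ /eqP ->]]].
have I0 : #|X1 :&: X2| = 0.
  apply/eqP; rewrite cards_eq0; apply/eqP/setP => x; rewrite !inE.
  by case xA: (x \in A); rewrite //= (negbTE (disj x xA)) andbF.
have := subset_leq_card sub; rewrite cardsU1 !inE (negbTE iA) (negbTE ie1) /=.
have := cardsUI X1 X2; rewrite I0 ce'.
rewrite /ncol -/X1 -/X2 in hA2 he2.
move=> h1 h2; move: h2; rewrite addn0 in h1; rewrite h1; lia.
Qed.

Theorem theorem6 (k n : nat) :
  2 <= k -> 2 * k - 1 <= n ->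
  (~~ odd k -> N_CM_le k n (n - k + 1)) /\
  (odd k -> forall H : {set {set 'I_n}},
      uniform (k - 1) H -> ~ property_C H ->
      N_CM_le k n ((n - k + 1) * (1 + #|H|))).
Proof.
move=> hk hn; split.
  move=> evk.
  have [A [_ hA]] : exists A : {set 'I_n}, A \subset setT /\ #|A| = k - 1.
    by apply: ex_subset; rewrite cardsT card_ord; lia.
  have hL : forall B, B \in [:: A] -> #|B| = k - 1 by move=> B; rewrite inE => /eqP ->.
  exists (qsof [:: A]); split.
    apply: success => //; first lia.
    apply: (hw_even (k:=k)) => //; last lia.
    by clear -evk hk; move: evk hk; case: k => // k' /=; rewrite subn1 /= negbK.
  rewrite (size_qs hL) /=; lia.
move=> ok H uH npc.
case: (set_0Vmem H) => [H0 | [e1 e1H]].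
  exfalso; apply: npc; exists [ffun _ => true] => e; by rewrite H0 inE.
have [A [sA hA]] : exists A : {set 'I_n}, A \subset ~: e1 /\ #|A| = k - 1.
  by apply: ex_subset; rewrite card_compl (uH e1 e1H); lia.
have disj : forall x, x \in A -> x \notin e1.
  by move=> x xA; have := subsetP sA x xA; rewrite inE.
have hL : forall B, B \in A :: enum H -> #|B| = k - 1.
  by move=> B; rewrite inE mem_enum => /orP [/eqP ->|/uH].
exists (qsof (A :: enum H)); split.
  apply: success => //; first lia.
  apply: (hw_odd (k:=k) (e1:=e1)) => //; lia.
rewrite (size_qs hL) /= -cardE.
have -> : n - (k - 1) = n - k + 1 by lia.
by rewrite mulnC add1n.
Qed.
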